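(* Let $Q$ be a restriction quantal frame. The map $\chi\colon Q\to\Omega(\mathsf{C}(Q))$, $\chi(a)=\mathscr{X}_a=\{A\in\mathsf{C}(Q):a\in A\}$, is a morphism of restriction quantal frames; in particular $\mathscr{X}_{ab}=\mathscr{X}_a\mathscr{X}_b$, $(\mathscr{X}_a)^{\ast}=\mathscr{X}_{a^{\ast}}$, $(\mathscr{X}_a)^{+}=\mathscr{X}_{a^{+}}$, and $\mathscr{X}_a$ is a partial isometry of $\Omega(\mathsf{C}(Q))$ whenever $a$ is a partial isometry of $Q$.
   Context: A restriction quantal frame is a frame $(Q,\le)$ with associative multiplication distributing over arbitrary joins on both sides, which is a monoid with identity $e$ and carries join-preserving unary operations $a\mapsto a^{\ast}$, $a\mapsto a^{+}$ with values in the set $e^{\downarrow}=\{x:x\le e\}$ of projections (a commutative subsemigroup of idempotents), fixing projections, with $aa^{\ast}=a$, $a^{+}a=a$, $(ab)^{\ast}=(a^{\ast}b)^{\ast}$, $(ab)^{+}=(ab^{+})^{+}$; the top element is a join of partial isometries ($a$ with $b\le a\Rightarrow b=b^{+}a=ab^{\ast}$) and partial isometries are closed under product. A morphism of restriction quantal frames is a semigroup homomorphism preserving all joins, finite meets, $\ast$, $+$, top element and identity, and mapping partial isometries to partial isometries. $\mathsf{C}(Q)$ is the étale topological category of completely prime filters of $Q$ (nonempty, upward closed, closed under binary meets, $0\notin A$, and $\bigvee_i a_i\in A\Rightarrow$ some $a_i\in A$), with $\mathbf{d}(A)=\{x:\exists a\in A,\ a^{\ast}\le x\}$, $\mathbf{r}(A)=\{x:\exists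 a\in A,\ a^{+}\le x\}$, $A\cdot B=\{x:\exists a\in A,b\in B,\ ab\le x\}$ defined iff $\mathbf{d}(A)=\mathbf{r}(B)$, and topology with base $\{\mathscr{X}_a:a \text{ a partial isometry}\}$. For an étale topological category $C$, $\Omega(C)$ denotes the restriction quantal frame of open subsets of $C$ under inclusion, with $UV=\{uv:u\in U,v\in V,\mathbf{d}(u)=\mathbf{r}(v)\}$, identity the set of identities, $U^{\ast}=\mathbf{d}(U)$, $U^{+}=\mathbf{r}(U)$. *)

(* Defs.v *)
Set Implicit Arguments.

Definition image {X Y : Type} (f : X -> Y) (S : X -> Prop) : Y -> Prop :=
  fun y => exists x, S x /\ y = f x.

Record RQF := {
  car :> Type;
  le : car -> car -> Prop;
  sup : (car -> Prop) -> car;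
  mul : car -> car -> car;
  e : car;
  star : car -> car;
  plus : car -> car;

  le_refl : forall a, le a a;
  le_trans : forall a b c, le a b -> le b c -> le a c;
  le_antisym : forall a b, le a b -> le b a -> a = b;
  sup_ub : forall S a, S a -> le a (sup S);
  sup_least : forall S b, (forall a, S a -> le a b) -> le (sup S) b;
  (* frame law: binary meets distribute over arbitrary joins *)
  frame_distr : forall a S,
    sup (fun x => le x a /\ le x (sup S)) =
    sup (image (fun s => sup (fun x => le x a /\ le x s)) S);

  mul_assoc : forall a b c, mul a (mul b c) = mul (mul a b) c;
  mul_e_l : forall a, mul e a = a;
  mul_e_r : forall a, mul a e = a;
  mul_sup_l : forall a S, mul a (sup S) = sup (image (mul a) S);
  mul_sup_r : forall a S, mul (sup S) a = sup (image (fun s => mul s a) S);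

  star_sup : forall S, star (sup S) = sup (image star S);
  plus_sup : forall S, plus (sup S) = sup (image plus S);
  star_le_e : forall a, le (star a) e;
  plus_le_e : forall a, le (plus a) e;
  proj_mul_closed : forall x y, le x e -> le y e -> le (mul x y) e;
  proj_comm : forall x y, le x e -> le y e -> mul x y = mul y x;
  proj_idem : forall x, le x e -> mul x x = x;
  star_proj : forall x, le x e -> star x = x;
  plus_proj : forall x, le x e -> plus x = x;
  mul_star : forall a, mul a (star a) = a;
  plus_mul : forall a, mul (plus a) a = a;
  star_mul : forall a b, star (mul a b) = star (mul (star a) b);
  plus_mul2 : forall a b, plus (mul a b) = plus (mul a (plus b));

  (* the top is a join of partial isometries; partial isometries are
     closed under product *)
  top_pi : sup (fun _ => True) =
           sup (fun a => forall b, le b a -> b = mul (plus b) a /\ b = mul a (star b));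
  pi_mul : forall a b,
    (forall c, le c a -> c = mul (plus c) a /\ c = mul a (star c)) ->
    (forall c, le c b -> c = mul (plus c) b /\ c = mul b (star c)) ->
    (forall c, le c (mul a b) -> c = mul (plus c) (mul a b) /\ c = mul (mul a b) (star c))
}.

Arguments le {r}. Arguments sup {r}. Arguments mul {r}. Arguments e {r}.
Arguments star {r}. Arguments plus {r}.

Section Defs.
Variable Q : RQF.

Definition top : Q := sup (fun _ => True).
Definition bot : Q := sup (fun _ => False).
Definition meet (a b : Q) : Q := sup (fun x => le x a /\ le x b).

Definition pisom (a : Q) : Prop :=
  forall b, le b a -> b = mul (plus b) a /\ b = mul a (star b).

Definition cpfilter (A : Q -> Prop) : Prop :=
  (exists a, A a) /\
  (forall a b, A a -> le a b -> A b) /\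
  (forall a b, A a -> A b -> A (meet a b)) /\
  ~ A bot /\
  (forall S, A (sup S) -> exists a, S a /\ A a).

(* an arrow of C(Q) is (represented by) a completely prime filter *)
Definition dom (A : Q -> Prop) : Q -> Prop :=
  fun x => exists a, A a /\ le (star a) x.
Definition ran (A : Q -> Prop) : Q -> Prop :=
  fun x => exists a, A a /\ le (plus a) x.
Definition comp (A B : Q -> Prop) : Q -> Prop :=
  fun x => exists a b, A a /\ B b /\ le (mul a b) x.

Definition chi (a : Q) : (Q -> Prop) -> Prop :=
  fun A => cpfilter A /\ A a.

Definition CSet := (Q -> Prop) -> Prop.

Definition subset (U V : CSet) : Prop := forall A, U A -> V A.

Definition is_open (U : CSet) : Prop :=
  subset U cpfilter /\
  forall A, U A -> exists a, pisom a /\ chi a A /\ subset (chi a) U.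

Definition Otop : CSet := cpfilter.

Definition Omul (U V : CSet) : CSet :=
  fun C => exists A B, U A /\ V B /\ dom A = ran B /\ C = comp A B.

Definition Oe : CSet :=
  fun C => exists A, cpfilter A /\ C = dom A.

Definition Ostar (U : CSet) : CSet := image dom U.
Definition Oplus (U : CSet) : CSet := image ran U.

Definition Opisom (U : CSet) : Prop :=
  forall V, is_open V -> subset V U ->
    V = Omul (Oplus V) U /\ V = Omul U (Ostar V).

Definition chi_is_RQF_morphism : Prop :=
  (forall a, is_open (chi a)) /\
  (forall a b, chi (mul a b) = Omul (chi a) (chi b)) /\
  (forall S : Q -> Prop,
     chi (sup S) = fun A => exists s, S s /\ chi s A) /\
  (forall a b, chi (meet a b) = fun A => chi a A /\ chi b A) /\
  chi top = Otop /\
  (forall a, chi (star a) = Ostar (chi a)) /\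
  (forall a, chi (plus a) = Oplus (chi a)) /\
  chi (@e Q) = Oe /\
  (forall a, pisom a -> Opisom (chi a)).

End Defs.

(* Main.v *)
Require Import Defs.
From Stdlib Require Import FunctionalExtensionality PropExtensionality.
Set Implicit Arguments.
Unset Strict Implicit.

Lemma pred_ext {X : Type} (P R : X -> Prop) : (forall x, P x <-> R x) -> P = R.
Proof. intros H; apply functional_extensionality; intro x;
  apply propositional_extensionality; auto. Qed.

Section Basics.
Variable Q : RQF.
Implicit Types a b c x y z p q r : Q.

Lemma sup2_le x y : le x y -> sup (fun z => z = x \/ z = y) = y.
Proof.
  intro H. apply le_antisym.
  - apply sup_least. intros a [-> | ->]; auto using le_refl.
  - apply sup_ub. auto.
Qed.

Lemma mul_mono_r a x y : le x y -> le (mul a x) (mul a y).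
Proof.
  intro H. assert (E : mul a y = mul a (sup (fun z => z = x \/ z = y)))
    by (rewrite (sup2_le H); reflexivity).
  rewrite E, mul_sup_l. apply sup_ub. exists x. auto.
Qed.

Lemma mul_mono_l a x y : le x y -> le (mul x a) (mul y a).
Proof.
  intro H. assert (E : mul y a = mul (sup (fun z => z = x \/ z = y)) a)
    by (rewrite (sup2_le H); reflexivity).
  rewrite E, mul_sup_r. apply sup_ub. exists x. auto.
Qed.

Lemma mul_mono a b x y : le a b -> le x y -> le (mul a x) (mul b y).
Proof. intros; eapply le_trans; [apply mul_mono_l | apply mul_mono_r]; eauto. Qed.

Lemma star_mono x y : le x y -> le (star x) (star y).
Proof.
  intro H. assert (E : star y = star (sup (fun z => z = x \/ z = y)))
    by (rewrite (sup2_le H); reflexivity).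
  rewrite E, star_sup. apply sup_ub. exists x. auto.
Qed.

Lemma plus_mono x y : le x y -> le (plus x) (plus y).
Proof.
  intro H. assert (E : plus y = plus (sup (fun z => z = x \/ z = y)))
    by (rewrite (sup2_le H); reflexivity).
  rewrite E, plus_sup. apply sup_ub. exists x. auto.
Qed.

Lemma bot_le x : le (bot Q) x.
Proof. apply sup_least. intros a []. Qed.

Lemma le_bot_mul x y : le x (bot Q) -> le (mul y x) (bot Q).
Proof.
  intro H. eapply le_trans. apply mul_mono_r. exact H.
  unfold bot. rewrite mul_sup_l. apply sup_least. intros a [z [[] _]].
Qed.

Lemma le_bot_star x : le x (bot Q) -> le (star x) (bot Q).
Proof.
  intro H. eapply le_trans. apply star_mono. exact H.
  unfold bot at 1. rewrite star_sup. apply sup_least. intros a [z [[] _]].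
Qed.

Lemma le_bot_of_star x : le (star x) (bot Q) -> le x (bot Q).
Proof. intro H. rewrite <- (mul_star _ x). apply le_bot_mul. exact H. Qed.

Lemma meet_lb1 a b : le (meet Q a b) a.
Proof. apply sup_least. intros z [H _]; exact H. Qed.
Lemma meet_lb2 a b : le (meet Q a b) b.
Proof. apply sup_least. intros z [_ H]; exact H. Qed.
Lemma meet_glb a b z : le z a -> le z b -> le z (meet Q a b).
Proof. intros; apply sup_ub; auto. Qed.

Lemma le_top x : le x (top Q).
Proof. apply sup_ub. exact I. Qed.

Lemma proj_mul_le p x : le p e -> le (mul p x) x.
Proof. intro H. rewrite <- (mul_e_l _ x) at 2. apply mul_mono_l; auto. Qed.
Lemma mul_proj_le p x : le p e -> le (mul x p) x.
Proof. intro H. rewrite <- (mul_e_r _ x) at 2. apply mul_mono_r; auto. Qed.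

Lemma proj_glb r p q : le r e -> le r p -> le r q -> le r (mul p q).
Proof. intros. rewrite <- (proj_idem _ r); auto. apply mul_mono; auto. Qed.

Lemma absorb p q : le p q -> le q e -> mul q p = p /\ mul p q = p.
Proof.
  intros H1 H2. assert (Hp : le p e) by (eapply le_trans; eauto).
  assert (E : mul p q = p).
  { apply le_antisym. apply mul_proj_le; auto. apply proj_glb; auto using le_refl. }
  split; auto. rewrite proj_comm; auto.
Qed.

Lemma plus_absorb r y : le r e -> le (plus y) r -> mul r y = y.
Proof.
  intros H1 H2. transitivity (mul r (mul (plus y) y)).
  - f_equal. symmetry. apply plus_mul.
  - rewrite mul_assoc. rewrite (proj1 (absorb H2 H1)). apply plus_mul.
Qed.

Lemma star_absorb r y : le r e -> le (star y) r -> mul y r = y.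
Proof.
  intros H1 H2. transitivity (mul (mul y (star y)) r).
  - f_equal. symmetry. apply mul_star.
  - rewrite <- mul_assoc. rewrite (proj2 (absorb H2 H1)). apply mul_star.
Qed.

Lemma star_mul_le a b : le (star (mul a b)) (star b).
Proof. rewrite star_mul. apply star_mono. apply proj_mul_le. apply star_le_e. Qed.

Lemma plus_mul_le a b : le (plus (mul a b)) (plus a).
Proof. rewrite plus_mul2. apply plus_mono. apply mul_proj_le. apply plus_le_e. Qed.

Lemma pisom_down p q : pisom Q p -> le q p -> pisom Q q.
Proof.
  intros Hp Hq c Hc.
  assert (Hcp : le c p) by (eapply le_trans; eauto).
  destruct (Hp c Hcp) as [E1 E2]. destruct (Hp q Hq) as [F1 F2].
  split.
  - rewrite F1. rewrite mul_assoc.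
    rewrite (proj2 (absorb (plus_mono Hc) (plus_le_e _ q))). exact E1.
  - rewrite F2. rewrite <- mul_assoc.
    rewrite (proj1 (absorb (star_mono Hc) (star_le_e _ q))). exact E2.
Qed.

Lemma sup_pi a : a = sup (fun y => pisom Q y /\ le y a).
Proof.
  apply le_antisym.
  - eapply le_trans. apply (meet_glb (le_refl _ a) (le_top a)).
    unfold meet, top. rewrite (top_pi Q). rewrite frame_distr.
    apply sup_least. intros z [s [Hs ->]]. apply sup_ub. split.
    + eapply pisom_down. exact Hs. apply meet_lb2.
    + apply meet_lb1.
  - apply sup_least. intros z [_ H]; exact H.
Qed.

End Basics.

Section Filt.
Variable Q : RQF.
Implicit Types a b c x y z p q r : Q.
Implicit Types A B C F : Q -> Prop.

Lemma cp_up A a b : cpfilter Q A -> A a -> le a b -> A b.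
Proof. intros [_ [H _]]; eauto. Qed.
Lemma cp_meet A a b : cpfilter Q A -> A a -> A b -> A (meet Q a b).
Proof. intros [_ [_ [H _]]]; eauto. Qed.
Lemma cp_nbot A : cpfilter Q A -> ~ A (bot Q).
Proof. intros [_ [_ [_ [H _]]]]; eauto. Qed.
Lemma cp_prime A S : cpfilter Q A -> A (sup S) -> exists a, S a /\ A a.
Proof. intros [_ [_ [_ [_ H]]]]; eauto. Qed.
Lemma cp_top A : cpfilter Q A -> A (top Q).
Proof. intros HA. pose proof HA as [[a Ha] _]. eapply cp_up; eauto. apply le_top. Qed.
Lemma cp_nle_bot A a : cpfilter Q A -> A a -> ~ le a (bot Q).
Proof. intros HA Ha Hb. apply (cp_nbot HA). eapply cp_up; eauto. Qed.

Lemma cp_pi A a : cpfilter Q A -> A a -> exists p, pisom Q p /\ le p a /\ A p.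
Proof.
  intros HA Ha. rewrite (sup_pi a) in Ha. destruct (cp_prime HA Ha) as [p [[H1 H2] H3]].
  eauto.
Qed.

Lemma cp_e A : cpfilter Q A -> A (star (e)) -> A e.
Proof. intros HA H. eapply cp_up; eauto. apply star_le_e. Qed.

Lemma dom_cp A : cpfilter Q A -> cpfilter Q (dom Q A).
Proof.
  intros HA. split; [|split; [|split; [|split]]].
  - destruct HA as [[a Ha] _]. exists (star a). exists a. split; auto using le_refl.
  - intros x y [a [Ha H]] Hxy. exists a. split; auto. eapply le_trans; eauto.
  - intros x y [a1 [Ha1 H1]] [a2 [Ha2 H2]]. exists (meet Q a1 a2). split.
    + apply cp_meet; auto.
    + apply meet_glb.
      * eapply le_trans; [apply star_mono, meet_lb1 | exact H1].
      * eapply le_trans; [apply star_mono, meet_lb2 | exact H2].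
  - intros [a [Ha H]]. apply (cp_nle_bot HA Ha). apply le_bot_of_star. exact H.
  - intros S [a [Ha H]].
    assert (H1 : le (star a) (meet Q e (sup S))) by (apply meet_glb; auto using star_le_e).
    unfold meet in H1. rewrite frame_distr in H1.
    assert (H2 : A (mul a (sup (image (fun s => meet Q e s) S)))).
    { eapply cp_up; eauto. rewrite <- (mul_star _ a) at 1. apply mul_mono_r. exact H1. }
    rewrite mul_sup_l in H2. destruct (cp_prime HA H2) as [y [[z [[s [Hs ->]] ->]] Hy]].
    exists s. split; auto. exists (mul a (meet Q e s)). split; auto.
    eapply le_trans. apply star_mul_le. rewrite star_proj by apply meet_lb1. apply meet_lb2.
Qed.

Lemma dom_e C : cpfilter Q C -> C e -> dom Q C = C.
Proof.
  intros HC He. apply pred_ext. intro x. split.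
  - intros [a [Ha H]]. apply (cp_up HC (a:=star a)); auto.
    apply (cp_up HC (cp_meet HC Ha He)).
    rewrite <- (star_proj _ _ (meet_lb2 a e)). apply star_mono. apply meet_lb1.
  - intros Hx. exists (meet Q x e). split. apply cp_meet; auto.
    rewrite (star_proj _ _ (meet_lb2 x e)). apply meet_lb1.
Qed.

Definition germ F g : Q -> Prop := fun x => exists c, F c /\ le c e /\ le (mul g c) x.

Lemma star_germ F g c : cpfilter Q F -> F (star g) -> F c -> le c e -> F (star (mul g c)).
Proof.
  intros HF Hg Hc Hce. rewrite star_mul. rewrite star_proj by (apply proj_mul_closed; auto using star_le_e).
  eapply cp_up. exact HF. apply (cp_meet HF Hg Hc).
  apply proj_glb. eapply le_trans; [apply meet_lb2 | exact Hce]. apply meet_lb1. apply meet_lb2.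
Qed.

Lemma germ_g F g : cpfilter Q F -> F (star g) -> germ F g g.
Proof. intros. exists (star g). split; auto. split. apply star_le_e. rewrite mul_star. apply le_refl. Qed.

Lemma germ_cp F g : cpfilter Q F -> pisom Q g -> F (star g) -> cpfilter Q (germ F g).
Proof.
  intros HF Hg Hs. split; [|split; [|split; [|split]]].
  - exists g. apply germ_g; auto.
  - intros x y [c [H1 [H2 H3]]] Hxy. exists c. split; auto. split; auto. eapply le_trans; eauto.
  - intros x y [c1 [H1 [H2 H3]]] [c2 [K1 [K2 K3]]]. exists (meet Q c1 c2). split.
    apply cp_meet; auto. split. eapply le_trans; [apply meet_lb1 | auto].
    apply meet_glb.
    + eapply le_trans; [apply mul_mono_r, meet_lb1 | auto].
    + eapply le_trans; [apply mul_mono_r, meet_lb2 | auto].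
  - intros [c [H1 [H2 H3]]]. apply (cp_nle_bot HF (star_germ HF Hs H1 H2)).
    apply le_bot_star. exact H3.
  - intros S [c [H1 [H2 H3]]].
    set (h := mul g c) in *.
    assert (Hh : pisom Q h) by (eapply pisom_down; [exact Hg | apply mul_proj_le; auto]).
    assert (K : le h (meet Q h (sup S))) by (apply meet_glb; auto using le_refl).
    unfold meet in K. rewrite frame_distr in K. apply star_mono in K.
    rewrite star_sup in K.
    assert (K2 : F (sup (image star (image (fun s => sup (fun x => le x h /\ le x s)) S)))).
    { eapply cp_up. exact HF. apply (star_germ HF Hs H1 H2). exact K. }
    destruct (cp_prime HF K2) as [y [[z [[s [Hs0 ->]] ->]] Hy]].
    fold (meet Q h s) in *.
    exists s. split; auto. exists (star (meet Q h s)). split; auto. split. apply star_le_e.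
    assert (Hyc : le (star (meet Q h s)) c).
    { eapply le_trans. apply star_mono, meet_lb1. unfold h. eapply le_trans. apply star_mul_le.
      rewrite star_proj; auto using le_refl. }
    rewrite <- (proj1 (absorb Hyc H2)). rewrite mul_assoc. fold h.
    rewrite <- (proj2 (Hh _ (meet_lb1 h s))). apply meet_lb2.
Qed.

Lemma germ_dom F g : cpfilter Q F -> F (star g) -> dom Q (germ F g) = F.
Proof.
  intros HF Hs. apply pred_ext. intro x. split.
  - intros [y [[c [H1 [H2 H3]]] H4]]. eapply cp_up. exact HF. apply (star_germ HF Hs H1 H2).
    eapply le_trans; [apply star_mono; exact H3 | exact H4].
  - intros Hx. assert (He : F e) by (apply (cp_up HF Hs); apply star_le_e).
    exists (mul g (meet Q x e)). split.
    + exists (meet Q x e). split. apply cp_meet; auto. split. apply meet_lb2. apply le_refl.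
    + eapply le_trans. apply star_mul_le. rewrite star_proj by apply meet_lb2. apply meet_lb1.
Qed.

End Filt.

Lemma pisom_swap (Q : RQF) (a : Q) :
  pisom Q a <-> (forall b, le b a -> b = mul a (star b) /\ b = mul (plus b) a).
Proof. unfold pisom. split; intros H b Hb; destruct (H b Hb); auto. Qed.

Definition op (Q : RQF) : RQF.
Proof.
  refine (@Build_RQF (car Q) (@le Q) (@sup Q) (fun a b => mul b a) e plus star
    (le_refl Q) (le_trans Q) (le_antisym Q) (sup_ub Q) (sup_least Q) (frame_distr Q)
    _ (mul_e_r Q) (mul_e_l Q) _ _ (plus_sup Q) (star_sup Q) (plus_le_e Q) (star_le_e Q)
    _ _ (proj_idem Q) (plus_proj Q) (star_proj Q) (plus_mul Q) (mul_star Q) _ _ _ _).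
  - intros a b c. symmetry. apply mul_assoc.
  - intros a S. apply mul_sup_r.
  - intros a S. apply mul_sup_l.
  - intros x y Hx Hy. apply proj_mul_closed; auto.
  - intros x y Hx Hy. apply proj_comm; auto.
  - intros a b. apply plus_mul2.
  - intros a b. apply star_mul.
  - rewrite top_pi. f_equal. apply pred_ext. intro a. apply pisom_swap.
  - intros a b Ha Hb c Hc.
    assert (Ha' : pisom Q a) by (apply pisom_swap; exact Ha).
    assert (Hb' : pisom Q b) by (apply pisom_swap; exact Hb).
    destruct (pi_mul Q b a Hb' Ha' c Hc). simpl. split; auto.
Defined.

Lemma pisom_op (Q : RQF) (a : Q) : pisom Q a -> pisom (op Q) a.
Proof. intros H b Hb. simpl. destruct (H b Hb). auto. Qed.

Section Ran.
Variable Q : RQF.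
Implicit Types a b c x y z p q r : Q.
Implicit Types A B C F : Q -> Prop.

Lemma ran_cp A : cpfilter Q A -> cpfilter Q (ran Q A).
Proof. exact (@dom_cp (op Q) A). Qed.

Lemma ran_e C : cpfilter Q C -> C e -> ran Q C = C.
Proof. exact (@dom_e (op Q) C). Qed.

Definition rgerm F g : Q -> Prop := fun x => exists c, F c /\ le c e /\ le (mul c g) x.

Lemma rgerm_cp F g : cpfilter Q F -> pisom Q g -> F (plus g) -> cpfilter Q (rgerm F g).
Proof. intros H1 H2 H3. exact (@germ_cp (op Q) F g H1 (pisom_op H2) H3). Qed.
Lemma rgerm_ran F g : cpfilter Q F -> F (plus g) -> ran Q (rgerm F g) = F.
Proof. exact (@germ_dom (op Q) F g). Qed.
Lemma rgerm_g F g : cpfilter Q F -> F (plus g) -> rgerm F g g.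
Proof. exact (@germ_g (op Q) F g). Qed.

Lemma dom_has_e A : cpfilter Q A -> dom Q A e.
Proof. intros HA. destruct HA as [[a Ha] _]. exists a. split; auto. apply star_le_e. Qed.
Lemma ran_has_e A : cpfilter Q A -> ran Q A e.
Proof. intros HA. destruct HA as [[a Ha] _]. exists a. split; auto. apply plus_le_e. Qed.

Lemma comp_ran B : cpfilter Q B -> comp Q (ran Q B) B = B.
Proof.
  intros HB. apply pred_ext. intro x. split.
  - intros [r [b [[b2 [Hb2 H1]] [Hb H2]]]].
    apply (cp_up HB (cp_meet HB Hb Hb2)).
    set (b3 := meet Q b b2).
    eapply le_trans; [|exact H2]. rewrite <- (plus_mul _ b3) at 1.
    apply mul_mono. eapply le_trans; [apply plus_mono, meet_lb2 | exact H1]. apply meet_lb1.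
  - intro Hx. exists (plus x), x. split. exists x. split; auto using le_refl. split; auto.
    rewrite plus_mul. apply le_refl.
Qed.

End Ran.
Section Ran2.
Variable Q : RQF.
Implicit Types a b c x y z p q r : Q.
Implicit Types A B C F : Q -> Prop.

Lemma comp_dom B : cpfilter Q B -> comp Q B (dom Q B) = B.
Proof.
  intros HB. pose proof (@comp_ran (op Q) B HB) as E.
  apply pred_ext. intro x. split.
  - intros [a [b [H1 [H2 H3]]]]. rewrite <- E. exists b, a. auto.
  - intros Hx. rewrite <- E in Hx. destruct Hx as [a [b [H1 [H2 H3]]]]. exists b, a. auto.
Qed.

Lemma ran_inj_sub a A B : pisom Q a -> cpfilter Q A -> cpfilter Q B -> A a -> B a ->
  ran Q A = ran Q B -> forall x, A x -> B x.
Proof.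
  intros Ha HA HB HAa HBa E x Hx.
  set (y := meet Q x a).
  assert (Hy : A y) by (apply cp_meet; auto).
  assert (Hr : ran Q B (plus y)) by (rewrite <- E; exists y; split; auto using le_refl).
  destruct Hr as [b' [Hb' H1]].
  set (b3 := meet Q b' a).
  apply (cp_up HB (a := b3)). apply cp_meet; auto.
  eapply le_trans; [|apply (meet_lb1 x a)]. fold y.
  rewrite (proj1 (Ha b3 (meet_lb2 _ _))). rewrite (proj1 (Ha y (meet_lb2 _ _))).
  apply mul_mono_l. eapply le_trans; [apply plus_mono, meet_lb1 | exact H1].
Qed.

Lemma ran_inj a A B : pisom Q a -> cpfilter Q A -> cpfilter Q B -> A a -> B a ->
  ran Q A = ran Q B -> A = B.
Proof.
  intros. apply pred_ext; split; eapply ran_inj_sub; eauto.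
Qed.

End Ran2.
Section Ran3.
Variable Q : RQF.
Implicit Types a b c x y z p q r : Q.
Implicit Types A B C F : Q -> Prop.
Lemma dom_inj a A B : pisom Q a -> cpfilter Q A -> cpfilter Q B -> A a -> B a ->
  dom Q A = dom Q B -> A = B.
Proof. intros Ha. apply (@ran_inj (op Q) a A B (pisom_op Ha)). Qed.

End Ran3.

Section S1.
Variable Q : RQF.
Implicit Types a b c x y z p q r : Q.
Implicit Types A B C F : Q -> Prop.

Lemma L_star a : chi Q (star a) = Ostar (chi Q a).
Proof.
  apply pred_ext. intro C. split.
  - intros [HC Hs]. rewrite (sup_pi a) in Hs. rewrite star_sup in Hs.
    destruct (cp_prime HC Hs) as [y [[g [[Hg Hga] ->]] Hy]].
    exists (germ C g). split.
    + split. apply germ_cp; auto.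
      apply (cp_up (germ_cp HC Hg Hy) (germ_g HC Hy) Hga).
    + symmetry. apply germ_dom; auto.
  - intros [A [[HA Ha] ->]]. split. apply dom_cp; auto. exists a. split; auto using le_refl.
Qed.
End S1.

Section S2.
Variable Q : RQF.
Implicit Types a b c x y z p q r : Q.
Implicit Types A B C F : Q -> Prop.

Lemma L_plus a : chi Q (plus a) = Oplus (chi Q a).
Proof. exact (L_star (Q := op Q) a). Qed.

Lemma L_open a : is_open (chi Q a).
Proof.
  split. intros A H; apply H.
  intros A [HA Ha]. destruct (cp_pi HA Ha) as [p [Hp [Hpa HAp]]].
  exists p. split; auto. split. split; auto.
  intros B [HB HBp]. split; auto. apply (cp_up HB HBp Hpa).
Qed.

Lemma L_sup (S : Q -> Prop) : chi Q (sup S) = fun A => exists s, S s /\ chi Q s A.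
Proof.
  apply pred_ext. intro A. split.
  - intros [HA Hs]. destruct (cp_prime HA Hs) as [s [H1 H2]]. exists s. split; auto. split; auto.
  - intros [s [Hs [HA Has]]]. split; auto. apply (cp_up HA Has). apply sup_ub; auto.
Qed.

Lemma L_meet a b : chi Q (meet Q a b) = fun A => chi Q a A /\ chi Q b A.
Proof.
  apply pred_ext. intro A. split.
  - intros [HA H]. split; split; auto; eapply (cp_up HA H); [apply meet_lb1 | apply meet_lb2].
  - intros [[HA H1] [_ H2]]. split; auto. apply cp_meet; auto.
Qed.

Lemma L_top : chi Q (top Q) = Otop Q.
Proof.
  apply pred_ext. intro A. split.
  - intros [HA _]; exact HA.
  - intros HA. split; auto. apply cp_top; auto.
Qed.

Lemma L_e : chi Q e = Oe Q.
Proof.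
  apply pred_ext. intro C. split.
  - intros [HC He]. exists C. split; auto. symmetry. apply dom_e; auto.
  - intros [A [HA ->]]. split. apply dom_cp; auto. apply dom_has_e; auto.
Qed.

Lemma L_pisom a : pisom Q a -> Opisom (chi Q a).
Proof.
  intros Hp V HV Hsub. split.
  - apply pred_ext. intro C. split.
    + intros HVC. destruct (Hsub C HVC) as [HC HCa].
      exists (ran Q C), C. split. exists C; split; auto. split. split; auto. split.
      apply dom_e. apply ran_cp; auto. apply ran_has_e; auto.
      symmetry. apply comp_ran; auto.
    + intros [A' [B [[A'' [HV'' ->]] [[HB HBa] [E ->]]]]].
      destruct (Hsub A'' HV'') as [H1 H2].
      rewrite dom_e in E by (apply ran_cp || apply ran_has_e; auto).
      assert (A'' = B) by (apply (ran_inj Hp H1 HB H2 HBa E)). subst.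
      rewrite comp_ran; auto.
  - apply pred_ext. intro C. split.
    + intros HVC. destruct (Hsub C HVC) as [HC HCa].
      exists C, (dom Q C). split. split; auto. split. exists C; split; auto. split.
      symmetry. apply ran_e. apply dom_cp; auto. apply dom_has_e; auto.
      symmetry. apply comp_dom; auto.
    + intros [A [B' [[HA HAa] [[A'' [HV'' ->]] [E ->]]]]].
      destruct (Hsub A'' HV'') as [H1 H2].
      rewrite ran_e in E by (apply dom_cp || apply dom_has_e; auto).
      assert (A = A'') by (apply (dom_inj Hp HA H1 HAa H2 E)). subst.
      rewrite comp_dom; auto.
Qed.

End S2.

Section S3.
Variable Q : RQF.
Implicit Types a b c x y z p q r : Q.
Implicit Types A B C F : Q -> Prop.

Lemma star_comp_eq a b : le (plus b) (star a) -> star (mul a b) = star b.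
Proof. intro H. rewrite star_mul. rewrite (plus_absorb (star_le_e _ _) H). reflexivity. Qed.

Lemma comp_cp A B : cpfilter Q A -> cpfilter Q B -> dom Q A = ran Q B -> cpfilter Q (comp Q A B).
Proof.
  intros HA HB E.
  assert (Key : forall a', A a' -> exists b3, B b3 /\ le (plus b3) (star a')).
  { intros a' Ha'. assert (H : dom Q A (star a')) by (exists a'; split; auto using le_refl).
    rewrite E in H. destruct H as [b'' [Hb'' H]]. exists b''. auto. }
  split; [|split; [|split; [|split]]].
  - destruct HA as [[a0 Ha0] _]. destruct HB as [[b0 Hb0] _].
    exists (mul a0 b0), a0, b0. auto using le_refl.
  - intros x y [a1 [b1 [H1 [H2 H3]]]] Hxy. exists a1, b1. split; auto. split; auto.
    eapply le_trans; eauto.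
  - intros x y [a1 [b1 [H1 [H2 H3]]]] [a2 [b2 [K1 [K2 K3]]]].
    exists (meet Q a1 a2), (meet Q b1 b2). split. apply cp_meet; auto. split. apply cp_meet; auto.
    apply meet_glb.
    + eapply le_trans; [|exact H3]. apply mul_mono; apply meet_lb1.
    + eapply le_trans; [|exact K3]. apply mul_mono; apply meet_lb2.
  - intros [a' [b' [Ha' [Hb' H]]]].
    destruct (Key a' Ha') as [b'' [Hb'' Hpl]].
    set (b3 := meet Q b' b'').
    assert (Hb3 : B b3) by (apply cp_meet; auto).
    assert (Hpl3 : le (plus b3) (star a')) by (eapply le_trans; [apply plus_mono, meet_lb2 | exact Hpl]).
    apply (cp_nle_bot HB Hb3). apply le_bot_of_star. rewrite <- (star_comp_eq Hpl3).
    apply le_bot_star. eapply le_trans; [|exact H]. apply mul_mono_r, meet_lb1.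
  - intros S [a' [b' [Ha' [Hb' H]]]].
    destruct (cp_pi HA Ha') as [a2 [Ha2 [Ha2a HAa2]]].
    destruct (cp_pi HB Hb') as [b2 [Hb2 [Hb2b HBb2]]].
    set (p := mul a2 b2).
    assert (Hp : pisom Q p) by exact (pi_mul Q a2 b2 Ha2 Hb2).
    assert (Hple : le p (sup S)) by (eapply le_trans; [apply mul_mono; eauto | exact H]).
    destruct (Key a2 HAa2) as [b4 [Hb4 Hpl]].
    set (b3 := meet Q b2 b4).
    assert (Hb3 : B b3) by (apply cp_meet; auto).
    assert (Hpl3 : le (plus b3) (star a2)) by (eapply le_trans; [apply plus_mono, meet_lb2 | exact Hpl]).
    assert (Hdom : dom Q B (star (meet Q p (sup S)))).
    { exists b3. split; auto. rewrite <- (star_comp_eq Hpl3).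
      eapply le_trans; [apply star_mono, mul_mono_r, meet_lb1|].
      apply star_mono. apply meet_glb; auto using le_refl. }
    unfold meet in Hdom. rewrite frame_distr, star_sup in Hdom.
    destruct (cp_prime (dom_cp HB) Hdom) as [y [[z [[s [Hs ->]] ->]] Hy]].
    fold (meet Q p s) in *.
    destruct Hy as [b5 [Hb5 Hs5]].
    set (b6 := meet Q b3 b5).
    exists s. split; auto. exists a2, b6. split; auto. split. apply cp_meet; auto.
    rewrite <- (mul_star _ (mul a2 b6)).
    eapply le_trans. apply mul_mono.
    + apply mul_mono_r. eapply le_trans; [apply meet_lb1|]. apply meet_lb1.
    + eapply le_trans. apply star_mul_le. eapply le_trans; [apply star_mono, meet_lb2|]. exact Hs5.
    + fold p. rewrite <- (proj2 (Hp _ (meet_lb1 p s))). apply meet_lb2.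
Qed.

Lemma L_mul a b : chi Q (mul a b) = Omul (chi Q a) (chi Q b).
Proof.
  apply pred_ext. intro C. split.
  - intros [HC Hab].
    rewrite (sup_pi a), mul_sup_r in Hab.
    destruct (cp_prime HC Hab) as [y [[a1 [[Ha1 Ha1a] ->]] H1]].
    rewrite (sup_pi b), mul_sup_l in H1.
    destruct (cp_prime HC H1) as [y [[b1 [[Hb1 Hb1b] ->]] Hab1]].
    set (D := dom Q C). assert (HD : cpfilter Q D) by (apply dom_cp; auto).
    assert (Hsb1 : D (star b1)) by (exists (mul a1 b1); split; auto; apply star_mul_le).
    set (B := germ D b1).
    assert (HB : cpfilter Q B) by (apply germ_cp; auto).
    assert (HBb1 : B b1) by (apply germ_g; auto).
    set (F := ran Q B). assert (HF : cpfilter Q F) by (apply ran_cp; auto).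
    set (d := star (mul a1 b1)).
    assert (Hd : D d) by (exists (mul a1 b1); split; auto using le_refl).
    assert (Hde : le d e) by apply star_le_e.
    assert (HBd : B (mul b1 d)) by (exists d; split; auto; split; auto using le_refl).
    assert (Kk : mul (star a1) b1 = mul b1 d).
    { rewrite (proj2 (Hb1 (mul (star a1) b1) (proj_mul_le _ (star_le_e _ _)))).
      unfold d. rewrite <- star_mul. reflexivity. }
    assert (HFa : F (star a1)).
    { exists (mul b1 d). split; auto. rewrite <- Kk. rewrite plus_mul2.
      rewrite plus_proj by (apply proj_mul_closed; apply star_le_e || apply plus_le_e).
      apply mul_proj_le. apply plus_le_e. }
    set (A := germ F a1).
    assert (HA : cpfilter Q A) by (apply germ_cp; auto).
    assert (HAa1 : A a1) by (apply germ_g; auto).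
    assert (Hp : pisom Q (mul a1 b1)) by exact (pi_mul Q a1 b1 Ha1 Hb1).
    exists A, B. split. split; auto. apply (cp_up HA HAa1 Ha1a).
    split. split; auto. apply (cp_up HB HBb1 Hb1b).
    split. unfold A. rewrite germ_dom; auto.
    apply pred_ext. intro x. split.
    + intro Hx. set (x' := meet Q x (mul a1 b1)).
      assert (Hx' : C x') by (apply cp_meet; auto).
      exists a1, (mul b1 (star x')). split; auto. split.
      * exists (star x'). split. exists x'. split; auto using le_refl. split. apply star_le_e. apply le_refl.
      * rewrite mul_assoc. rewrite <- (proj2 (Hp x' (meet_lb2 _ _))). apply meet_lb1.
    + intros [a' [b' [[c1 [Hc1 [Hc1e Ha']]] [[c2 [Hc2 [Hc2e Hb']]] Hx]]]].
      destruct Hc1 as [b'' [[c3 [Hc3 [Hc3e Hb'']]] Hpl]].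
      set (d3 := meet Q c2 c3).
      assert (Hd3 : D d3) by (apply cp_meet; auto).
      assert (Hd3e : le d3 e) by (eapply le_trans; [apply meet_lb1 | exact Hc2e]).
      assert (Hpl3 : le (plus (mul b1 d3)) c1).
      { eapply le_trans. apply plus_mono, mul_mono_r, meet_lb2.
        eapply le_trans. apply plus_mono, Hb''. exact Hpl. }
      assert (Habs : mul c1 (mul b1 d3) = mul b1 d3) by (apply plus_absorb; auto).
      assert (HCd : C (mul (mul a1 b1) d3)).
      { destruct Hd3 as [c [Hc Hsc]].
        set (c' := meet Q c (mul a1 b1)).
        assert (Hc' : C c') by (apply cp_meet; auto).
        apply (cp_up HC Hc'). rewrite (proj2 (Hp c' (meet_lb2 _ _))).
        apply mul_mono_r. eapply le_trans; [apply star_mono, meet_lb1 | exact Hsc]. }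
      apply (cp_up HC HCd).
      rewrite <- mul_assoc, <- Habs, mul_assoc.
      eapply le_trans; [|exact Hx]. apply mul_mono; auto.
      eapply le_trans; [|exact Hb']. apply mul_mono_r, meet_lb1.
  - intros [A [B [[HA Ha] [[HB Hb] [E ->]]]]]. split.
    apply comp_cp; auto. exists a, b. auto using le_refl.
Qed.

End S3.
Unset Implicit Arguments.
Set Strict Implicit.

Theorem mainTheorem13 (Q : RQF) : chi_is_RQF_morphism Q.
Proof.
  unfold chi_is_RQF_morphism.
  split. exact (@L_open Q).
  split. exact (@L_mul Q).
  split. exact (@L_sup Q).
  split. exact (@L_meet Q).
  split. exact (@L_top Q).
  split. exact (@L_star Q).
  split. exact (@L_plus Q).
  split. exact (@L_e Q).
  exact (@L_pisom Q).
Qed.
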